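(* Let $U$ be a finite set of men and $W_1\subseteq W_2$ finite sets of women with $|W_1|\le|W_2|=|U|$, each man having a strict total order over $W_2$ and each woman a strict total order over $U$. Let $M_1'$ be a stable matching of $(U,W_1)$ and $M_2$ a stable matching of $(U,W_2)$, and let $M_2'$ be the union of: the pairs of $M_1'\cap M_2$; the $M_2$-edges of each path component and each Type I cycle of $G(M_1',M_2)$; the $M_1'$-edges of each Type II cycle of $G(M_1',M_2)$. Then $M_2'$ men-dominates $M_2$.
   Context: A matching is a set of man–woman pairs with each person in at most one pair; a matching is stable if it has no blocking pair $(u,w)\notin M$ with ($u$ unmatched or preferring $w$ to his partner) and ($w$ unmatched or preferring $u$ to her partner). $M$ men-dominates $M'$ if every man's partner in $M$ is at least as good for him as his partner in $M'$. The difference graph $G(M,M')$ has vertex set $U\cup W_2$ and edge set $M\triangle M'$. A cycle $C$ of $G(M_1',M_2)$ is of Type I if every man in $C$ strictly prefers his partner in $M_2$ to his partner in $M_1'$ and every woman in $C$ strictly prefers her partner in $M_1'$ to her partner in $M_2$; of Type II if every man in $C$ strictly prefers his partner in $M_1'$ to his partner in $M_2$ and every woman strictly prefers her partner in $M_2$ to her partner in $M_1'$. *)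

(* Defs.v *)
From mathcomp Require Import all_boot.
Set Implicit Arguments. Unset Strict Implicit. Unset Printing Implicit Defensive.

(* Convention: r x y means "x is (strictly) preferred to y". *)
Definition strict_total_order (T : finType) (r : rel T) : Prop :=
  irreflexive r /\ transitive r /\ forall x y, x != y -> r x y || r y x.

Section Matchings.
Variables (U W : finType).
Variables (prefU : U -> rel W) (prefW : W -> rel U).
Implicit Types (M : {set U * W}) (A : {set W}).

(* each person in at most one pair *)
Definition is_matching M : Prop :=
  forall u w u' w', (u, w) \in M -> (u', w') \in M -> (u == u') = (w == w').

Definition matching_of A M : Prop :=
  is_matching M /\ forall u w, (u, w) \in M -> w \in A.

Definition man_matched M u := [exists w, (u, w) \in M].
Definition woman_matched M w := [exists u, (u, w) \in M].
Definition man_prefers M u w := [exists w', ((u, w') \in M) && prefU u w w'].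
Definition woman_prefers M w u := [exists u', ((u', w) \in M) && prefW w u u'].

Definition blocking_pair M u w : bool :=
  [&& (u, w) \notin M,
      ~~ man_matched M u || man_prefers M u w &
      ~~ woman_matched M w || woman_prefers M w u].

Definition stable_matching A M : Prop :=
  matching_of A M /\ forall u w, w \in A -> ~~ blocking_pair M u w.

Definition men_dominates M M' : Prop :=
  forall u w', (u, w') \in M' -> exists2 w, (u, w) \in M & (w = w' \/ prefU u w w').

Definition symdiff M1 M2 : {set U * W} := (M1 :\: M2) :|: (M2 :\: M1).

Definition diff_adj M1 M2 : rel (U + W) := fun x y =>
  match x, y with
  | inl u, inr w => (u, w) \in symdiff M1 M2
  | inr w, inl u => (u, w) \in symdiff M1 M2
  | _, _ => false
  end.

Definition comp_is_cycle M1 M2 (x : U + W) : bool :=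
  [forall y, connect (diff_adj M1 M2) x y ==>
     (#|[set z | diff_adj M1 M2 y z]| == 2)].

Definition comp_typeI M1 M2 (x : U + W) : bool :=
  [forall u, connect (diff_adj M1 M2) x (inl u) ==>
     [exists w1, exists w2, [&& (u, w1) \in M1, (u, w2) \in M2 & prefU u w2 w1]]]
  && [forall w, connect (diff_adj M1 M2) x (inr w) ==>
     [exists u1, exists u2, [&& (u1, w) \in M1, (u2, w) \in M2 & prefW w u1 u2]]].

Definition comp_typeII M1 M2 (x : U + W) : bool :=
  [forall u, connect (diff_adj M1 M2) x (inl u) ==>
     [exists w1, exists w2, [&& (u, w1) \in M1, (u, w2) \in M2 & prefU u w1 w2]]]
  && [forall w, connect (diff_adj M1 M2) x (inr w) ==>
     [exists u1, exists u2, [&& (u1, w) \in M1, (u2, w) \in M2 & prefW w u2 u1]]].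

(* M2' built from M1' (= M1) and M2 *)
Definition M2prime M1 M2 : {set U * W} :=
  [set p : U * W |
     (p \in M1 :&: M2)
  || ((p \in M2 :\: M1) &&
        (~~ comp_is_cycle M1 M2 (inl p.1)
         || (comp_is_cycle M1 M2 (inl p.1) && comp_typeI M1 M2 (inl p.1))))
  || ((p \in M1 :\: M2) &&
        (comp_is_cycle M1 M2 (inl p.1) && comp_typeII M1 M2 (inl p.1)))].

End Matchings.

(* Main.v *)
Require Import Defs.
From mathcomp Require Import all_boot.

Theorem mainTheorem6 (U W : finType) (W1 : {set W})
  (prefU : U -> rel W) (prefW : W -> rel U)
  (hW1 : #|W1| <= #|W|) (hcard : #|W| = #|U|)
  (hprefU : forall u, strict_total_order (prefU u))
  (hprefW : forall w, strict_total_order (prefW w))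
  (M1 M2 : {set U * W})
  (hM1 : stable_matching prefU prefW W1 M1)
  (hM2 : stable_matching prefU prefW [set: W] M2) :
  men_dominates prefU (M2prime prefU prefW M1 M2) M2.
Proof.
move=> u w' Huw'.
case: hM1 => [[mat1 dom1] st1]; case: hM2 => [[mat2 _] st2].
have u1r : forall a b b', (a, b) \in M1 -> (a, b') \in M1 -> b = b'.
  by move=> a b b' H H'; apply/eqP; rewrite -(mat1 _ _ _ _ H H') eqxx.
have u1l : forall a a' b, (a, b) \in M1 -> (a', b) \in M1 -> a = a'.
  by move=> a a' b H H'; apply/eqP; rewrite (mat1 _ _ _ _ H H') eqxx.
have u2r : forall a b b', (a, b) \in M2 -> (a, b') \in M2 -> b = b'.
  by move=> a b b' H H'; apply/eqP; rewrite -(mat2 _ _ _ _ H H') eqxx.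
have u2l : forall a a' b, (a, b) \in M2 -> (a', b) \in M2 -> a = a'.
  by move=> a a' b H H'; apply/eqP; rewrite (mat2 _ _ _ _ H H') eqxx.
have irrU : forall v x, prefU v x x = false by move=> v x; case: (hprefU v) => H _; exact: H.
have irrW : forall v x, prefW v x x = false by move=> v x; case: (hprefW v) => H _; exact: H.
have totU : forall v x y, x != y -> prefU v x y || prefU v y x.
  by move=> v x y; case: (hprefU v) => _ [_ H]; exact: H.
have totW : forall v x y, x != y -> prefW v x y || prefW v y x.
  by move=> v x y; case: (hprefW v) => _ [_ H]; exact: H.
have inM2' : forall p, (p \in M2prime prefU prefW M1 M2) =
   [|| (p \in M1 :&: M2),
      ((p \in M2 :\: M1) &&
        (~~ comp_is_cycle M1 M2 (inl p.1)
         || (comp_is_cycle M1 M2 (inl p.1) && comp_typeI prefU prefW M1 M2 (inl p.1))))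
  | ((p \in M1 :\: M2) &&
        (comp_is_cycle M1 M2 (inl p.1) && comp_typeII prefU prefW M1 M2 (inl p.1)))].
  by move=> p; rewrite /M2prime inE orbA.
case: (boolP ((u, w') \in M1)) => H1.
  apply: (ex_intro2 _ _ w'); last by left.
  by rewrite inM2' !inE H1 Huw'.
case Hc: (comp_is_cycle M1 M2 (inl u)).
  2: { apply: (ex_intro2 _ _ w'); last by left.
    by rewrite inM2' /= !inE H1 Huw' Hc /= orbT. }
case HI: (comp_typeI prefU prefW M1 M2 (inl u)).
  apply: (ex_intro2 _ _ w'); last by left.
  by rewrite inM2' /= !inE H1 Huw' Hc HI /= orbT.
pose D := diff_adj M1 M2.
pose comp y := connect D (inl u) y.
have cycH : forall y, comp y -> #|[set z | D y z]| == 2.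
  by move=> y cy; move/forallP: Hc => /(_ y) /implyP; apply.
have comp_step : forall y z, comp y -> D y z -> comp z.
  by move=> y z cy dyz; apply: connect_trans cy (connect1 dyz).
have symE : forall v w, ((v, w) \in symdiff M1 M2) =
    (((v, w) \in M1) && ((v, w) \notin M2)) || (((v, w) \in M2) && ((v, w) \notin M1)).
  by move=> v w; rewrite /symdiff !inE andbC [X in _ || X]andbC.
have deg_man : forall v, comp (inl v) -> exists w1, exists w2,
    [/\ (v, w1) \in M1, (v, w1) \notin M2, (v, w2) \in M2 & (v, w2) \notin M1].
  move=> v /cycH /cards2P [z1 [z2 [nz Hs]]].
  have : z1 \in [set z | D (inl v) z] by rewrite Hs !inE eqxx.
  have : z2 \in [set z | D (inl v) z] by rewrite Hs !inE eqxx orbT.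
  rewrite !inE.
  case: z1 nz Hs => [//|w1]; case: z2 => [//|w2] nz _ /=.
  rewrite !symE.
  have nw : w1 != w2 by apply: contraNneq nz => ->.
  case/orP=> /andP [Ha Hb]; case/orP=> /andP [Hc' Hd].
  - by move: nw; rewrite (u1r _ _ _ Ha Hc') eqxx.
  - by exists w2, w1.
  - by exists w1, w2.
  - by move: nw; rewrite (u2r _ _ _ Ha Hc') eqxx.
have deg_woman : forall w, comp (inr w) -> exists u1, exists u2,
    [/\ (u1, w) \in M1, (u1, w) \notin M2, (u2, w) \in M2 & (u2, w) \notin M1].
  move=> w /cycH /cards2P [z1 [z2 [nz Hs]]].
  have : z1 \in [set z | D (inr w) z] by rewrite Hs !inE eqxx.
  have : z2 \in [set z | D (inr w) z] by rewrite Hs !inE eqxx orbT.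
  rewrite !inE.
  case: z1 nz Hs => [v1|//]; case: z2 => [v2|//] nz _ /=.
  rewrite !symE.
  have nw : v1 != v2 by apply: contraNneq nz => ->.
  case/orP=> /andP [Ha Hb]; case/orP=> /andP [Hc' Hd].
  - by move: nw; rewrite (u1l _ _ _ Ha Hc') eqxx.
  - by exists v2, v1.
  - by exists v1, v2.
  - by move: nw; rewrite (u2l _ _ _ Ha Hc') eqxx.
have stab1 : forall a w1 w2 u1, (a, w1) \in M1 -> (a, w2) \in M2 ->
    prefU a w2 w1 -> (u1, w2) \in M1 -> a != u1 -> prefW w2 u1 a.
  move=> a w1 w2 u1 Ha1 Ha2 Hp Hu1 nau.
  have := st1 a w2 (dom1 _ _ Hu1).
  have Hn : (a, w2) \notin M1.
    by apply/negP => H; move: nau; rewrite (u1l _ _ _ H Hu1) eqxx.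
  have Hmp : man_prefers prefU M1 a w2 by rewrite /man_prefers /woman_prefers /man_matched /woman_matched; apply/existsP; exists w1; rewrite Ha1 Hp.
  have Hwm : woman_matched M1 w2 by rewrite /man_prefers /woman_prefers /man_matched /woman_matched; apply/existsP; exists u1.
  rewrite /blocking_pair Hn Hmp Hwm /= orbT /= => Hwp.
  have : ~~ prefW w2 a u1.
    by apply: contra Hwp => H; apply/existsP; exists u1; rewrite Hu1 H.
  by case/orP: (totW w2 _ _ nau) => ->.
have stab2 : forall u1 w2 a w3, (u1, w2) \in M1 -> (a, w2) \in M2 ->
    prefW w2 u1 a -> (u1, w3) \in M2 -> u1 != a -> prefU u1 w3 w2.
  move=> u1 w2 a w3 H1w Ha2 Hp Hw3 nua.
  have := st2 u1 w2 (in_setT w2).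
  have Hn : (u1, w2) \notin M2.
    by apply/negP => H; move: nua; rewrite (u2l _ _ _ H Ha2) eqxx.
  have Hwp : woman_prefers prefW M2 w2 u1 by rewrite /man_prefers /woman_prefers /man_matched /woman_matched; apply/existsP; exists a; rewrite Ha2 Hp.
  have Hmm : man_matched M2 u1 by rewrite /man_prefers /woman_prefers /man_matched /woman_matched; apply/existsP; exists w3.
  rewrite /blocking_pair Hn Hwp Hmm /= orbT andbT => Hmp.
  have : ~~ prefU u1 w2 w3.
    by apply: contra Hmp => H; rewrite /woman_prefers /man_prefers; apply/existsP; exists w3; rewrite Hw3 H.
  have nw : w2 != w3 by apply/negP => /eqP E; move: Hn; rewrite E Hw3.
  by case/orP: (totU u1 _ _ nw) => ->.
pose P v := [exists w1, exists w2, [&& (v, w1) \in M1, (v, w2) \in M2 & prefU v w2 w1]].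
pose Q w := [exists u1, exists u2, [&& (u1, w) \in M1, (u2, w) \in M2 & prefW w u1 u2]].
pose f v := odflt w' [pick w | (v, w) \in M2].
pose g w := odflt u [pick v | (v, w) \in M1].
have fP : forall v w, (v, w) \in M2 -> f v = w.
  move=> v w H; rewrite /f; case: pickP => [w0 H0|H0] /=; first exact: u2r H0 H.
  by move: (H0 w); rewrite H.
have gP : forall v w, (v, w) \in M1 -> g w = v.
  move=> v w H; rewrite /g; case: pickP => [v0 H0|H0] /=; first exact: u1l H0 H.
  by move: (H0 v); rewrite H.
pose A := [set v | comp (inl v) && P v].
pose B := [set w | comp (inr w) && Q w].
have fM : forall v, comp (inl v) -> (v, f v) \in M2 /\ (v, f v) \notin M1.
  by move=> v /deg_man [w1 [w2 [_ _ H H']]]; rewrite (fP _ _ H).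
have gM : forall w, comp (inr w) -> (g w, w) \in M1 /\ (g w, w) \notin M2.
  by move=> w /deg_woman [u1 [u2 [H H' _ _]]]; rewrite (gP _ _ H).
have fAB : f @: A \subset B.
  apply/subsetP => x /imsetP [a Ha ->]; move: Ha; rewrite inE => /andP [ca /existsP [w1 /existsP [w2]]].
  case/and3P => Ha1 Ha2 Hp.
  have E := fP _ _ Ha2; rewrite E.
  have nA : (a, w2) \notin M1.
    by apply/negP => H; move: Hp; rewrite (u1r _ _ _ H Ha1) irrU.
  have cw : comp (inr w2) by apply: comp_step ca _; rewrite /= symE Ha2 nA orbT.
  rewrite inE cw /=.
  case: (gM _ cw) => G1 G2.
  have nau : a != g w2 by apply/negP => /eqP E'; move: nA; rewrite E' G1.
  apply/existsP; exists (g w2); apply/existsP; exists a.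
  by rewrite G1 Ha2 (stab1 _ _ _ _ Ha1 Ha2 Hp G1 nau).
have gBA : g @: B \subset A.
  apply/subsetP => x /imsetP [b Hb ->]; move: Hb; rewrite inE => /andP [cb /existsP [u1 /existsP [u2]]].
  case/and3P => Hb1 Hb2 Hp.
  have E := gP _ _ Hb1; rewrite E.
  have nA : (u1, b) \notin M2.
    by apply/negP => H; move: Hp; rewrite (u2l _ _ _ H Hb2) irrW.
  have cu : comp (inl u1) by apply: comp_step cb _; rewrite /= symE Hb1 nA.
  rewrite inE cu /=.
  case: (fM _ cu) => F1 F2.
  have nua : u1 != u2 by apply/negP => /eqP E'; move: Hp; rewrite E' irrW.
  apply/existsP; exists b; apply/existsP; exists (f u1).
  by rewrite Hb1 F1 (stab2 _ _ _ _ Hb1 Hb2 Hp F1 nua).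
have finj : {in A &, injective f}.
  move=> a b; rewrite !inE => /andP [ca _] /andP [cb _] E.
  by case: (fM _ ca) => Fa _; case: (fM _ cb) => Fb _; move: Fa; rewrite E => Fa; exact: u2l Fa Fb.
have ginj : {in B &, injective g}.
  move=> a b; rewrite !inE => /andP [ca _] /andP [cb _] E.
  by case: (gM _ ca) => Ga _; case: (gM _ cb) => Gb _; move: Ga; rewrite E => Ga; exact: u1r Ga Gb.
have cA := card_in_imset finj.
have cB := card_in_imset ginj.
have le1 := subset_leq_card fAB.
have le2 := subset_leq_card gBA.
have fAeq : f @: A = B by apply/eqP; rewrite eqEcard fAB cA -cB le2.
have gBeq : g @: B = A by apply/eqP; rewrite eqEcard gBA cB -cA le1.
have edge : forall v w, comp (inl v) -> comp (inr w) ->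
    (v, w) \in symdiff M1 M2 -> P v = Q w.
  move=> v w cv cw; rewrite symE => /orP [/andP [H1' H2'] | /andP [H2' H1']].
  - have E := gP _ _ H1'; apply/idP/idP => Hx.
    + have : v \in g @: B by rewrite gBeq inE cv Hx.
      case/imsetP => b; rewrite inE => /andP [cb Qb] Eb.
      case: (gM _ cb) => Gb _; rewrite -Eb in Gb.
      by rewrite -(u1r _ _ _ Gb H1').
    + have : g w \in A by apply: (subsetP gBA); apply: imset_f; rewrite inE cw Hx.
      by rewrite E inE => /andP [].
  - have E := fP _ _ H2'; apply/idP/idP => Hx.
    + have : f v \in B by apply: (subsetP fAB); apply: imset_f; rewrite inE cv Hx.
      by rewrite E inE => /andP [].
    + have : w \in f @: A by rewrite fAeq inE cw Hx.
      case/imsetP => a; rewrite inE => /andP [ca Pa] Ea.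
      case: (fM _ ca) => Fa _; rewrite -Ea in Fa.
      by rewrite -(u2l _ _ _ Fa H2').
pose lab y := match y with inl v => P v | inr w => Q w end.
have lab_edge : forall y z, comp y -> D y z -> lab y = lab z.
  move=> [v|w] [v'|w'0] cy dyz //=.
  - by apply: edge => //; apply: comp_step cy dyz.
  - by symmetry; apply: edge => //; apply: comp_step cy dyz.
have lab_all : forall y, comp y -> lab y = P u.
  have H : forall p x, comp x -> path D x p -> lab (last x p) = lab x.
    elim=> [|z p IH] x cx //= /andP [dxz pz].
    by rewrite (IH z (comp_step _ _ cx dxz) pz); symmetry; apply: lab_edge.
  move=> y cy; move/connectP: (cy) => [p pth Ey].
  by rewrite Ey (H p (inl u) (connect0 _ _) pth).
case Pu: (P u).
  suff : comp_typeI prefU prefW M1 M2 (inl u) by rewrite HI.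
  rewrite /comp_typeI; apply/andP; split.
  - apply/forallP => v; apply/implyP => cv.
    by have := lab_all _ cv; rewrite Pu /= => Hx; exact: Hx.
  - apply/forallP => w; apply/implyP => cw.
    by have := lab_all _ cw; rewrite Pu /= => Hx; exact: Hx.
have HII : comp_typeII prefU prefW M1 M2 (inl u).
  rewrite /comp_typeII; apply/andP; split.
  - apply/forallP => v; apply/implyP => cv.
    have := lab_all _ cv; rewrite Pu /= => Pv.
    case: (deg_man _ cv) => [w1 [w2 [Ha Hb Hc' Hd]]].
    have nw : w1 != w2 by apply/negP => /eqP E; move: Hb; rewrite E Hc'.
    apply/existsP; exists w1; apply/existsP; exists w2; rewrite Ha Hc' /=.
    case/orP: (totU v _ _ nw) => // Hp.
    suff : P v by rewrite Pv.
    by rewrite /P; apply/existsP; exists w1; apply/existsP; exists w2; rewrite Ha Hc' Hp.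
  - apply/forallP => w; apply/implyP => cw.
    have := lab_all _ cw; rewrite Pu /= => Qw.
    case: (deg_woman _ cw) => [u1 [u2 [Ha Hb Hc' Hd]]].
    have nw : u2 != u1 by apply/negP => /eqP E; move: Hb; rewrite -E Hc'.
    apply/existsP; exists u1; apply/existsP; exists u2; rewrite Ha Hc' /=.
    case/orP: (totW w _ _ nw) => // Hp.
    suff : Q w by rewrite Qw.
    by rewrite /Q; apply/existsP; exists u1; apply/existsP; exists u2; rewrite Ha Hc' Hp.
case: (deg_man _ (connect0 D (inl u))) => [w1 [w2 [Ha Hb Hc' Hd]]].
have E2 := u2r _ _ _ Hc' Huw'; subst w2.
apply: (ex_intro2 _ _ w1).
  by rewrite inM2' /= !inE Ha Hb Hc HII /= !orbT.
right.
have nw : w1 != w' by apply/negP => /eqP E; move: Hb; rewrite E Hc'.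
case/orP: (totU u _ _ nw) => // Hp.
suff : P u by rewrite Pu.
by rewrite /P; apply/existsP; exists w1; apply/existsP; exists w'; rewrite Ha Hc' Hp.
Qed.
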